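(* Let $W$ be a graphon satisfying the Regularity Condition. There exists $\varepsilon'>0$ such that $\det M(y)>\varepsilon'$ for all $y\in[0,1]^2$.
   Context: A graphon is a symmetric measurable $W:[0,1]^2\to[0,1]$; $D(x)=\int_0^1W(x,y)dy$. Regularity Condition: $W\in\mathcal{C}^3([0,1]^2)$, $D'>0$, $W\le1-\varepsilon_0$ and $D\ge\varepsilon_0$ for some $\varepsilon_0\in(0,1/2)$. For $y=(y_1,y_2)\in[0,1]^2$, $M(y)$ is the $2\times2$ symmetric matrix with diagonal entries $D(y_1)(1-D(y_1))$, $D(y_2)(1-D(y_2))$ and off-diagonal entries $\int_0^1W(y_1,z)W(y_2,z)dz-D(y_1)D(y_2)$. *)

(* Defs.v *)
From Stdlib Require Import Reals.
From Coquelicot Require Import Coquelicot.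
Open Scope R_scope.

(* Graphons are represented as functions W : R -> R -> R; only their values on
   [0,1]^2 matter for the graphon properties below. *)

Definition in01 (x : R) : Prop := 0 <= x <= 1.

Definition px (f : R -> R -> R) : R -> R -> R :=
  fun x y => Derive (fun t => f t y) x.
Definition py (f : R -> R -> R) : R -> R -> R :=
  fun x y => Derive (fun t => f x t) y.

Fixpoint Ck (k : nat) (Om : R * R -> Prop) (f : R -> R -> R) : Prop :=
  match k with
  | 0%nat => forall p, Om p -> continuous (fun q : R * R => f (fst q) (snd q)) p
  | S k' =>
      (forall p, Om p -> continuous (fun q : R * R => f (fst q) (snd q)) p) /\
      (forall p, Om p -> ex_derive (fun t => f t (snd p)) (fst p)
                       /\ ex_derive (fun t => f (fst p) t) (snd p)) /\
      Ck k' Om (px f) /\ Ck k' Om (py f)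
  end.

(* W in C^3([0,1]^2): W is C^3 on an open set containing the closed square. *)
Definition C3_square (W : R -> R -> R) : Prop :=
  exists U : R * R -> Prop,
    open U /\ (forall x y, in01 x -> in01 y -> U (x, y)) /\ Ck 3 U W.

(* Graphon: symmetric, [0,1]-valued on [0,1]^2 (measurability is implied by
   the continuity in the Regularity Condition). *)
Definition graphon (W : R -> R -> R) : Prop :=
  (forall x y, in01 x -> in01 y -> W x y = W y x) /\
  (forall x y, in01 x -> in01 y -> 0 <= W x y <= 1).

Definition Deg (W : R -> R -> R) (x : R) : R := RInt (fun y => W x y) 0 1.

Definition regularity (W : R -> R -> R) : Prop :=
  C3_square W /\
  (forall x, in01 x -> ex_derive (Deg W) x /\ 0 < Derive (Deg W) x) /\
  exists eps0 : R, 0 < eps0 < 1/2 /\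
    (forall x y, in01 x -> in01 y -> W x y <= 1 - eps0) /\
    (forall x, in01 x -> eps0 <= Deg W x).

Definition M11 (W : R -> R -> R) (y1 y2 : R) : R := Deg W y1 * (1 - Deg W y1).
Definition M22 (W : R -> R -> R) (y1 y2 : R) : R := Deg W y2 * (1 - Deg W y2).
Definition M12 (W : R -> R -> R) (y1 y2 : R) : R :=
  RInt (fun z => W y1 z * W y2 z) 0 1 - Deg W y1 * Deg W y2.

Definition detM (W : R -> R -> R) (y1 y2 : R) : R :=
  M11 W y1 y2 * M22 W y1 y2 - M12 W y1 y2 * M12 W y1 y2.

(* Main.v *)
Require Import Defs.
From Stdlib Require Import Reals Lra Psatz.
From Coquelicot Require Import Coquelicot.
Open Scope R_scope.

Ltac req := intros; cbv beta; match goal with |- ?a = ?b => change (@eq R a b) end; ring.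

Definition C01 (h : R -> R) := forall z, 0 <= z <= 1 -> continuous h z.

Lemma C01_plus f g : C01 f -> C01 g -> C01 (fun z => f z + g z).
Proof. intros Hf Hg z Hz. exact (continuous_plus f g z (Hf z Hz) (Hg z Hz)). Qed.

Lemma C01_mult f g : C01 f -> C01 g -> C01 (fun z => f z * g z).
Proof. intros Hf Hg z Hz. exact (continuous_mult f g z (Hf z Hz) (Hg z Hz)). Qed.

Lemma C01_const c : C01 (fun _ => c).
Proof. intros z Hz. apply continuous_const. Qed.

Lemma C01_scal k f : C01 f -> C01 (fun z => k * f z).
Proof. intros Hf. apply (C01_mult (fun _ => k) f); [apply C01_const|exact Hf]. Qed.

Lemma C01_ex h : C01 h -> ex_RInt h 0 1.
Proof.
  intros H. apply (@ex_RInt_continuous R_CompleteNormedModule). intros z Hz.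
  rewrite Rmin_left in Hz by lra. rewrite Rmax_right in Hz by lra. auto.
Qed.

Lemma RInt_pl f g : C01 f -> C01 g ->
  RInt (fun z => f z + g z) 0 1 = RInt f 0 1 + RInt g 0 1.
Proof. intros Hf Hg. exact (@RInt_plus R_CompleteNormedModule f g 0 1 (C01_ex f Hf) (C01_ex g Hg)). Qed.

Lemma RInt_sc k f : C01 f -> RInt (fun z => k * f z) 0 1 = k * RInt f 0 1.
Proof. intros Hf. exact (@RInt_scal R_CompleteNormedModule f 0 1 k (C01_ex f Hf)). Qed.

Lemma RInt_cst (c : R) : RInt (fun _ => c) 0 1 = c.
Proof. rewrite (@RInt_const R_CompleteNormedModule). simpl. unfold scal; simpl; unfold mult; simpl. ring. Qed.

Lemma var_nonneg h : C01 h -> (RInt h 0 1) ^ 2 <= RInt (fun z => h z * h z) 0 1.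
Proof.
  intros Hh. set (m := RInt h 0 1).
  assert (H0 : 0 <= RInt (fun z => (h z - m) * (h z - m)) 0 1).
  { apply RInt_ge_0; [lra| |intros x _; apply Rle_0_sqr].
    apply C01_ex. apply C01_mult; apply C01_plus; try apply C01_const; auto. }
  rewrite (@RInt_ext R_CompleteNormedModule _ (fun z => h z * h z + ((-2 * m) * h z + m * m))) in H0
    by req.
  rewrite RInt_pl, RInt_pl, RInt_sc, RInt_cst in H0; auto;
    try apply C01_plus; try apply C01_scal; try apply C01_mult; try apply C01_const; auto.
  fold m in H0. nra.
Qed.

Lemma alg (Df Dg Ff Gg H e : R) : 0 < e -> e <= Df -> e <= Dg ->
  e * Df <= Df - Ff -> e * Dg <= Dg - Gg ->
  (forall s t, (s * Df + t * Dg) ^ 2 <= s * s * Ff + (2 * s * t * H + t * t * Gg)) ->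
  e ^ 4 <= Df * (1 - Df) * (Dg * (1 - Dg)) - (H - Df * Dg) * (H - Df * Dg).
Proof.
  intros He Hdf Hdg Ha Hb2 Hv.
  set (M11 := Df * (1 - Df)). set (M22 := Dg * (1 - Dg)). set (M12 := H - Df * Dg).
  assert (Ha' : e * e <= Df - Ff) by nra.
  assert (Hb' : e * e <= Dg - Gg) by nra.
  assert (HQ : forall s t, s * s * (Df - Ff) + t * t * (Dg - Gg)
                <= s * s * M11 + 2 * s * t * M12 + t * t * M22).
  { intros s t. pose proof (Hv s t). unfold M11, M12, M22. nra. }
  assert (H11 : e * e <= M11).
  { pose proof (HQ 1 0). nra. }
  pose proof (HQ M12 (- M11)) as Q.
  assert (Q2 : e * e * (M11 * M11) <= M11 * (M11 * M22 - M12 * M12)).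
  { assert (0 <= M12 * M12 * (Df - Ff)) by nra. nra. }
  assert (e * e * M11 <= M11 * M22 - M12 * M12).
  { assert (0 < M11) by nra.
    apply Rmult_le_reg_l with M11; [lra|]. nra. }
  nra.
Qed.

Lemma key f g e : 0 < e -> C01 f -> C01 g ->
  (forall z, 0 <= z <= 1 -> 0 <= f z <= 1 - e /\ 0 <= g z <= 1 - e) ->
  e <= RInt f 0 1 -> e <= RInt g 0 1 ->
  e ^ 4 <= RInt f 0 1 * (1 - RInt f 0 1) * (RInt g 0 1 * (1 - RInt g 0 1))
     - (RInt (fun z => f z * g z) 0 1 - RInt f 0 1 * RInt g 0 1)
       * (RInt (fun z => f z * g z) 0 1 - RInt f 0 1 * RInt g 0 1).
Proof.
  intros He Cf Cg Hb Hdf Hdg.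
  set (Df := RInt f 0 1). set (Dg := RInt g 0 1).
  set (Ff := RInt (fun z => f z * f z) 0 1).
  set (Gg := RInt (fun z => g z * g z) 0 1).
  set (H := RInt (fun z => f z * g z) 0 1).
  assert (Ha : e * Df <= Df - Ff).
  { unfold Df, Ff. rewrite <- RInt_sc by auto.
    replace (RInt f 0 1 - RInt (fun z => f z * f z) 0 1)
      with (RInt (fun z => f z + (-1) * (f z * f z)) 0 1).
    2:{ rewrite RInt_pl, RInt_sc; try req; try apply C01_scal; try apply C01_mult; auto. }
    apply RInt_le; [lra| apply C01_ex, C01_scal; auto | |].
    - apply C01_ex, C01_plus; auto. apply C01_scal, C01_mult; auto.
    - intros x Hx. destruct (Hb x ltac:(lra)) as [[? ?] _]. nra. }
  assert (Hb2 : e * Dg <= Dg - Gg).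
  { unfold Dg, Gg. rewrite <- RInt_sc by auto.
    replace (RInt g 0 1 - RInt (fun z => g z * g z) 0 1)
      with (RInt (fun z => g z + (-1) * (g z * g z)) 0 1).
    2:{ rewrite RInt_pl, RInt_sc; try req; try apply C01_scal; try apply C01_mult; auto. }
    apply RInt_le; [lra| apply C01_ex, C01_scal; auto | |].
    - apply C01_ex, C01_plus; auto. apply C01_scal, C01_mult; auto.
    - intros x Hx. destruct (Hb x ltac:(lra)) as [_ [? ?]]. nra. }
  assert (Hv : forall s t, (s * Df + t * Dg) ^ 2 <= s * s * Ff + (2 * s * t * H + t * t * Gg)).
  { intros s t.
    assert (Ch : C01 (fun z => s * f z + t * g z)) by (apply C01_plus; apply C01_scal; auto).
    pose proof (var_nonneg _ Ch) as V.
    rewrite RInt_pl, RInt_sc, RInt_sc in V; auto; try apply C01_scal; auto.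
    rewrite (@RInt_ext R_CompleteNormedModule (fun z => (s * f z + t * g z) * (s * f z + t * g z)) (fun z => (s * s) * (f z * f z) + ((2 * s * t) * (f z * g z)
                 + (t * t) * (g z * g z)))) in V by req.
    rewrite RInt_pl, RInt_pl, RInt_sc, RInt_sc, RInt_sc in V; auto;
      try apply C01_plus; try apply C01_scal; try apply C01_mult; auto; exact V.
    }
  exact (alg Df Dg Ff Gg H e He Hdf Hdg Ha Hb2 Hv).
Qed.

Theorem lemma11p1 (W : R -> R -> R) :
  graphon W -> regularity W ->
  exists eps' : R, 0 < eps' /\
    forall y1 y2 : R, in01 y1 -> in01 y2 -> eps' < detM W y1 y2.
Proof.
  intros [Hsym Hbd] [[U [HU [HinU HC]]] [_ [e [He [Hle HD]]]]].
  destruct HC as [Hcont _].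
  assert (Cy : forall y, in01 y -> C01 (fun z => W y z)).
  { intros y Hy z Hz.
    apply (continuous_comp_2 (fun _ => y) (fun z => z) W z).
    - apply continuous_const.
    - apply continuous_id.
    - apply Hcont. apply HinU; auto. }
  exists (e ^ 4 / 2). split.
  { assert (0 < e ^ 4) by (apply pow_lt; lra). lra. }
  intros y1 y2 H1 H2.
  assert (K := key (fun z => W y1 z) (fun z => W y2 z) e ltac:(lra)
                 (Cy y1 H1) (Cy y2 H2)).
  assert (0 < e ^ 4) by (apply pow_lt; lra).
  unfold detM, M11, M22, M12, Deg.
  eapply Rlt_le_trans; [| apply K]; try lra.
  - intros z Hz. assert (Hz1 : in01 z) by exact Hz.
    pose proof (Hbd y1 z H1 Hz1). pose proof (Hbd y2 z H2 Hz1).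
    pose proof (Hle y1 z H1 Hz1). pose proof (Hle y2 z H2 Hz1). cbv beta. lra.
  - apply (HD y1 H1).
  - apply (HD y2 H2).
Qed.
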